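(* Let $k_{ap}>0$, $k_{ad}>0$, $\omega_o>0$, $c_r>0$, $d\in\mathbb R$, $L_f\ge0$. Let $f:[0,\infty)\to\mathbb R$ be absolutely continuous with $|\dot f(t)|\le L_f$ for all $t\ge0$. Consider a solution on $[0,\infty)$ of the closed-loop system $$\dot x_1=x_2,\qquad \dot x_2=f(t)-\lambda(t),$$ $$\dot\xi=-\omega_o\xi-\omega_o^2x_2+\omega_o\lambda,\qquad \hat f=\xi+\omega_o x_2,$$ $$\lambda(t)=k_{ap}\big(x_1-r\big)+k_{ad}\big(x_2-\dot r\big)+\hat f(t)-\ddot r(t),$$ where $$r(t)=d+\big(x_1(0)-d\big)e^{-c_rt}+\big(x_2(0)+c_r(x_1(0)-d)\big)te^{-c_rt}.$$ Let $h$ be the impulse response of $H(s)=\frac{1}{s^2+k_{ad}s+k_{ap}}$ and $\|h\|_{L_1}=\int_0^\infty|h(\tau)|\,d\tau$. Then $$\limsup_{T\to\infty}\frac1T\int_0^T\big(x_1(t)-d\big)_+\,dt\le\|h\|_{L_1}\frac{L_f}{\omega_o},$$ where $(z)_+=\max\{z,0\}$.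
   Context: Surrogate model of Lagrangian safe RL: $x_1(t)$ models the population discounted cost return $J_c(\pi(t))$ of the current policy, $x_2$ its derivative, $\lambda$ the Lagrange multiplier, $f$ a lumped unknown disturbance, $(\xi,\hat f)$ a reduced-order extended state observer with gain $\omega_o$, $d$ the cost threshold, and $r$ a critically damped reference (solution of $\ddot r=-2c_r\dot r-c_r^2(r-d)$, $r(0)=x_1(0)$, $\dot r(0)=x_2(0)$) converging to $d$. The impulse response $h$ solves $\ddot h+k_{ad}\dot h+k_{ap}h=0$, $h(0)=0$, $\dot h(0)=1$. *)

(* Defs.v *)
From Stdlib Require Import Reals.
From Coquelicot Require Import Coquelicot.
Open Scope R_scope.

(* Critically damped reference r(t) with r(0) = a, r'(0) = b, converging to d. *)
Definition rref (cr d a b : R) (t : R) : R :=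
  d + (a - d) * exp (- cr * t) + (b + cr * (a - d)) * t * exp (- cr * t).

Definition fhat (wo : R) (xi x2 : R -> R) (t : R) : R := xi t + wo * x2 t.

Definition lam (kap kad wo : R) (r : R -> R) (x1 x2 xi : R -> R) (t : R) : R :=
  kap * (x1 t - r t) + kad * (x2 t - Derive r t) + fhat wo xi x2 t
  - Derive (Derive r) t.

Definition pos_part (z : R) : R := Rmax z 0.

(* Main.v *)
Require Import Defs.
From Stdlib Require Import FunctionalExtensionality.
From Stdlib Require Import Reals Lra Psatz.
From Coquelicot Require Import Coquelicot.
Open Scope R_scope.

Ltac rring := cbv beta; match goal with |- ?a = ?b => change (@eq R a b) end; ring.

Lemma isd_val (f : R -> R) x a b : is_derive f x a -> a = b -> is_derive f x b.
Proof. intros H ->; exact H. Qed.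

Lemma isd_mult (f g : R -> R) x a b : is_derive f x a -> is_derive g x b ->
  is_derive (fun y => f y * g y) x (a * g x + f x * b).
Proof. intros Ha Hb. apply (is_derive_mult f g x a b Ha Hb). exact Rmult_comm. Qed.

Lemma isd_plus (f g : R -> R) x a b : is_derive f x a -> is_derive g x b ->
  is_derive (fun y => f y + g y) x (a + b).
Proof. intros Ha Hb. apply (is_derive_plus f g x a b Ha Hb). Qed.

Lemma isd_sub (f : R -> R) t x a : is_derive f (t - x) a ->
  is_derive (fun y => f (t - y)) x (- a).
Proof. intros Ha.
  assert (Hg : is_derive (fun y => t - y) x (-1)) by (auto_derive; auto; ring).
  pose proof (is_derive_comp f (fun y => t - y) x a (-1) Ha Hg) as H.
  eapply isd_val. exact H. simpl. change (scal (-1) a) with (-1 * a). ring. Qed.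

Lemma cont_mult (f g : R -> R) x : continuous f x -> continuous g x ->
  continuous (fun y => f y * g y) x.
Proof. intros; apply (continuous_mult f g x); auto. Qed.

Lemma cont_sub (f : R -> R) t x : continuous f (t - x) -> continuous (fun y => f (t - y)) x.
Proof. intros H. apply (continuous_comp (fun y => t - y) f x); auto.
  apply (continuous_minus (fun _ => t) (fun y => y)). apply continuous_const. apply continuous_id. Qed.

Lemma conv_rep (kap kad : R) (h dh G e e1 : R -> R)
 (hh : forall t, is_derive h t (dh t)) (hdh : forall t, is_derive dh t (-kad*dh t - kap*h t))
 (hh0 : h 0 = 0) (hdh0 : dh 0 = 1)
 (hG : forall x, continuous G x)
 (he : forall x, 0 <= x -> is_derive e x (e1 x))
 (he1 : forall x, 0<=x -> is_derive e1 x (G x - kap*e x - kad*e1 x))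
 (e0 : e 0 = 0) (e10 : e1 0 = 0) t (ht: 0<=t) :
 is_RInt (fun u => h u * G (t-u)) 0 t (e t).
Proof.
  pose (phi := fun u => h u * e1 (t-u) + (dh u + kad*h u) * e (t-u)).
  assert (H : is_RInt (fun u => -(h u * G (t-u))) 0 t (minus (phi t) (phi 0))).
  { apply (is_RInt_derive (V:=R_CompleteNormedModule) phi (fun u => -(h u * G (t-u))) 0 t).
    - intros u Hu. rewrite Rmin_left in Hu by lra. rewrite Rmax_right in Hu by lra.
      unfold phi. eapply isd_val.
      apply isd_plus. apply isd_mult. apply hh. apply isd_sub. apply he1. lra.
      apply isd_mult. apply isd_plus. apply hdh. apply is_derive_scal. apply hh.
      apply isd_sub. apply he. lra.
      cbv beta; match goal with |- ?a = ?b => change (@eq R a b) end; ring.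
    - intros u Hu. apply (continuous_opp (fun u => h u * G (t-u))). apply cont_mult.
      apply (ex_derive_continuous (K:=R_AbsRing) (V:=R_NormedModule) h). eexists; apply hh.
      apply cont_sub. apply hG. }
  unfold phi in H. rewrite !Rminus_0_r, !Rminus_eq_0, hh0, hdh0, e0, e10 in H.
  apply is_RInt_opp in H.
  match type of H with is_RInt _ _ _ ?v => replace v with (e t) in H end.
  2: { unfold minus, opp, plus; simpl; ring. }
  eapply is_RInt_ext. 2: exact H.
  intros; simpl. unfold opp; simpl; ring.
Qed.
Lemma ball_R (x y e : R) : ball x e y <-> Rabs (y - x) < e.
Proof. unfold ball; simpl; unfold AbsRing_ball, abs, minus, plus, opp; simpl. tauto. Qed.

Lemma lip_cont (f : R -> R) Lf (hLf : 0 <= Lf)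
  (hf : forall s t, 0 <= s -> 0 <= t -> Rabs (f t - f s) <= Lf * Rabs (t - s)) x :
  continuous (fun s => f (Rmax 0 s)) x.
Proof.
  apply filterlim_locally. intros eps.
  assert (Hd : 0 < eps / (Lf + 1)) by (apply Rdiv_lt_0_compat; [apply cond_pos | lra]).
  exists (mkposreal _ Hd). intros y Hy. apply ball_R in Hy. apply ball_R. simpl in *.
  eapply Rle_lt_trans. apply hf; apply Rmax_l.
  assert (Rabs (Rmax 0 y - Rmax 0 x) <= Rabs (y - x)).
  { unfold Rmax; destruct (Rle_dec 0 y), (Rle_dec 0 x); unfold Rabs;
    repeat destruct Rcase_abs; lra. }
  apply Rle_lt_trans with (Lf * Rabs (y - x)). apply Rmult_le_compat_l; lra.
  pose proof (cond_pos eps).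
  apply Rle_lt_trans with (Lf * (eps / (Lf+1))). apply Rmult_le_compat_l. lra. revert Hy. unfold ball; simpl; unfold AbsRing_ball, abs, minus, plus, opp; simpl. intro Q. left; exact Q.
  apply Rlt_le_trans with ((Lf+1) * (eps/(Lf+1))). apply Rmult_lt_compat_r; lra.
  right; field; lra.
Qed.

Lemma cont_of_derive (f : R -> R) x : ex_derive f x -> continuous f x.
Proof. intros H. apply (ex_derive_continuous (K:=R_AbsRing) (V:=R_NormedModule) f). exact H. Qed.

Lemma RInt_val (f : R -> R) a b v : is_RInt f a b v -> RInt f a b = v.
Proof. apply (is_RInt_unique (V:=R_CompleteNormedModule)). Qed.

Lemma gbound (wo Lf : R) (hwo: 0<wo) (hLf: 0<=Lf) (f F : R->R)
  (hf : forall s t, 0 <= s -> 0 <= t -> Rabs (f t - f s) <= Lf * Rabs (t - s))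
  (hF : forall s, 0<=s -> is_derive F s (wo*(f s - F s))) t (ht: 0<=t) :
  Rabs (f t - F t) <= Lf/wo + exp(-wo*t) * Rabs (f 0 - F 0).
Proof.
  pose (psi := fun s => exp (-wo*(t-s)) * (F s - f t)).
  pose (D := fun s => wo * exp (-wo*(t-s)) * (f (Rmax 0 s) - f t)).
  assert (HI : is_RInt D 0 t (minus (psi t) (psi 0))).
  { apply (is_RInt_derive (V:=R_CompleteNormedModule) psi D 0 t).
    - intros u Hu. rewrite Rmin_left in Hu by lra. rewrite Rmax_right in Hu by lra.
      unfold psi, D. eapply isd_val. apply isd_mult.
      + assert (He : is_derive (fun s => exp (-wo*(t-s))) u (wo * exp (-wo*(t-u)))).
        { auto_derive; auto. unfold Rminus; ring. }
        exact He.
      + apply (is_derive_minus F (fun _ => f t)). apply hF; lra. apply is_derive_const.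
      + rewrite Rmax_right by lra. unfold minus, plus, opp, zero; simpl. ring.
    - intros u Hu. unfold D. apply cont_mult. apply cont_of_derive. auto_derive; auto.
      apply (continuous_minus (fun s => f (Rmax 0 s)) (fun _ => f t)).
      apply (lip_cont f Lf hLf hf). apply continuous_const. }
  pose (B := fun s => Lf * wo * (t - s) * exp (-wo*(t-s))).
  pose (chi := fun s => Lf * ((t - s) * exp (-wo*(t-s)) + exp (-wo*(t-s)) / wo)).
  assert (HB : is_RInt B 0 t (minus (chi t) (chi 0))).
  { apply (is_RInt_derive (V:=R_CompleteNormedModule) chi B 0 t).
    - intros u Hu. unfold chi, B. auto_derive; auto. unfold Rminus; field. lra.
    - intros u Hu. unfold B. apply cont_of_derive. auto_derive; auto. }
  assert (Hle : Rabs (RInt D 0 t) <= RInt B 0 t).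
  { eapply Rle_trans. apply abs_RInt_le. exact ht. eexists; exact HI.
    apply RInt_le. exact ht.
    apply (ex_RInt_continuous (V:=R_CompleteNormedModule)). intros z Hz. apply (continuous_comp D Rabs).
    unfold D. apply cont_mult. apply cont_of_derive. auto_derive; auto.
      apply (continuous_minus (fun s => f (Rmax 0 s)) (fun _ => f t)).
      apply (lip_cont f Lf hLf hf). apply continuous_const.
    apply continuous_Rabs.
    eexists; exact HB.
    intros s Hs. unfold D, B. rewrite Rmax_right by lra.
    rewrite Rabs_mult. rewrite Rabs_pos_eq.
    2: { apply Rmult_le_pos. lra. left; apply exp_pos. }
    rewrite Rmult_comm. 
    assert (H1 := hf s t ltac:(lra) ltac:(lra)).
    rewrite (Rabs_pos_eq (t - s)) in H1 by lra.
    assert (0 <= wo * exp (- wo * (t - s))) by (apply Rmult_le_pos; [lra | left; apply exp_pos]).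
    apply Rle_trans with ((Lf * (t - s)) * (wo * exp (- wo * (t - s)))).
    apply Rmult_le_compat_r; auto. rewrite Rabs_minus_sym; exact H1. right; ring. }
  rewrite (RInt_val _ _ _ _ HI) in Hle. rewrite (RInt_val _ _ _ _ HB) in Hle.
  unfold psi, chi, minus, plus, opp in Hle; simpl in Hle.
  replace (t - t) with 0 in Hle by ring. replace (t - 0) with t in Hle by ring.
  rewrite Rmult_0_r, exp_0 in Hle.
  assert (Hf := hf 0 t ltac:(lra) ht). rewrite Rminus_0_r, (Rabs_pos_eq t ht) in Hf.
  set (E := exp (- wo * t)) in *.
  assert (HE : 0 < E) by apply exp_pos.
  replace (Lf * (0 * 1 + 1 / wo) + - (Lf * (t * E + E / wo))) with (Lf/wo - Lf * t * E - E * (Lf / wo)) in Hle by (field; lra).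
  assert (Hq : 0 <= E * (Lf / wo)) by (apply Rmult_le_pos; [lra | apply Rdiv_le_0_compat; lra]).
  replace (f t - F t) with (-( (1*(F t - f t) + -(E*(F 0 - f t))) + E*(F 0 - f t))) by ring.
  rewrite Rabs_Ropp. eapply Rle_trans. apply Rabs_triang.
  rewrite Rabs_mult, (Rabs_pos_eq E) by lra.
  assert (H2 : Rabs (F 0 - f t) <= Rabs (f 0 - F 0) + Lf * t) by (split_Rabs; lra).
  assert (H3 : E * Rabs (F 0 - f t) <= E * (Rabs (f 0 - F 0) + Lf * t)) by (apply Rmult_le_compat_l; lra).
  lra.
Qed.
Lemma exp_small (c M1 M2 eta : R) : 0 < c -> 0 <= M1 -> 0 <= M2 -> 0 < eta ->
  exists S, 0 <= S /\ forall y, S <= y -> exp (-c*y) * (M1 + M2 * y) <= eta.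
Proof.
  intros hc h1 h2 he.
  exists (M1/(eta*c) + 4*M2/(eta*c^2)). split.
  { assert (0 < eta*c) by nra. assert (0 < eta*c^2) by (apply Rmult_lt_0_compat; [lra | apply pow_lt; lra]). apply Rplus_le_le_0_compat; apply Rdiv_le_0_compat; lra. }
  intros y Hy.
  assert (0 < eta*c) by nra. assert (0 < eta*c^2) by (apply Rmult_lt_0_compat; [lra | apply pow_lt; lra]).
  assert (HS1 : 0 <= M1/(eta*c)) by (apply Rdiv_le_0_compat; lra).
  assert (HS2 : 0 <= 4*M2/(eta*c^2)) by (apply Rdiv_le_0_compat; lra).
  assert (Hm1 : M1 <= eta * c * y).
  { assert (M1 = eta*c*(M1/(eta*c))) by (field; lra). nra. }
  assert (Hm2 : M2 * y <= eta * (c*y/2)^2).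
  { assert (M2 = eta*c^2/4*(4*M2/(eta*c^2))) by (field; lra).
    assert (0 <= y) by lra.
    assert (4*M2/(eta*c^2) <= y) by lra.
    assert (M2 <= eta*c^2/4*y) by nra. nra. }
  pose (u := exp (c*y/2)).
  assert (Hu : 1 + c*y/2 <= u) by apply exp_ineq1_le.
  assert (Hexp : exp (c*y) = u*u) by (unfold u; rewrite <- exp_plus; f_equal; field).
  assert (Hinv : exp (-c*y) * exp (c*y) = 1) by (rewrite <- exp_plus; replace (-c*y + c*y) with 0 by ring; apply exp_0).
  assert (0 < exp (-c*y)) by apply exp_pos.
  assert (0 <= y) by lra.
  assert (Hbig : M1 + M2 * y <= eta * (u*u)).
  { assert (0 <= c*y/2) by nra.
    assert ((1 + c*y/2)*(1+c*y/2) <= u*u) by nra. nra. }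
  rewrite <- Hexp in Hbig.
  apply Rle_trans with (exp (-c*y) * (eta * exp (c*y))).
  apply Rmult_le_compat_l; lra.
  right. replace (exp (-c*y) * (eta * exp (c*y))) with (eta * (exp (-c*y) * exp (c*y))) by ring.
  rewrite Hinv; ring.
Qed.

Lemma L1tail (h : R -> R) (normL1 : R)
  (hnorm : is_RInt_gen (fun t => Rabs (h t)) (at_point 0) (Rbar_locally p_infty) normL1)
  eta (heta : 0 < eta) :
  exists X, forall y, X < y -> Rabs (RInt (fun t => Rabs (h t)) 0 y - normL1) < eta.
Proof.
  assert (Hb : locally normL1 (ball normL1 eta)) by (apply (locally_ball normL1 (mkposreal _ heta))).
  specialize (hnorm _ Hb).
  destruct hnorm as [Qa Qb HQa HQb Hall].
  destruct HQb as [M HM]. exists M. intros y Hy.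
  destruct (Hall 0 y HQa (HM y Hy)) as [v [Hv Hbv]]. simpl in Hv.
  rewrite (is_RInt_unique (V:=R_CompleteNormedModule) _ _ _ _ Hv).
  revert Hbv. unfold ball; simpl; unfold AbsRing_ball, abs, minus, plus, opp; simpl. auto.
Qed.

Lemma exp_le_mono x y : x <= y -> exp x <= exp y.
Proof. intros H. destruct (Rle_lt_or_eq_dec _ _ H) as [H1|H1]. left; apply exp_increasing; auto. subst; lra. Qed.

Lemma RInt_scal_R (f : R -> R) a b l : ex_RInt f a b -> RInt (fun x => l * f x) a b = l * RInt f a b.
Proof. intros H. apply (RInt_scal (V:=R_CompleteNormedModule) f a b l H). Qed.

Lemma RInt_Chasles_R (f : R -> R) a b c : ex_RInt f a b -> ex_RInt f b c -> RInt f a b + RInt f b c = RInt f a c.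
Proof. intros H1 H2. apply (RInt_Chasles (V:=R_CompleteNormedModule) f a b c H1 H2). Qed.

Lemma RInt_const_R a b (c : R) : RInt (fun _ => c) a b = (b - a) * c.
Proof. apply (RInt_const (V:=R_CompleteNormedModule)). Qed.

Lemma exRI_cont (f : R -> R) a b : (forall z, Rmin a b <= z <= Rmax a b -> continuous f z) -> ex_RInt f a b.
Proof. apply (ex_RInt_continuous (V:=R_CompleteNormedModule)). Qed.

Lemma ex_RInt_scal_R (f : R -> R) a b l : ex_RInt f a b -> ex_RInt (fun x => l * f x) a b.
Proof. intros H. apply (ex_RInt_scal (V:=R_NormedModule) f a b l H). Qed.

Theorem theoremC8
  (kap kad wo cr d Lf : R)
  (hkap : 0 < kap) (hkad : 0 < kad) (hwo : 0 < wo) (hcr : 0 < cr) (hLf : 0 <= Lf)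
  (f : R -> R)
  (* f absolutely continuous on [0,oo) with |f'| <= Lf (a.e.), i.e. Lf-Lipschitz *)
  (hf : forall s t, 0 <= s -> 0 <= t -> Rabs (f t - f s) <= Lf * Rabs (t - s))
  (x1 x2 xi : R -> R)
  (hx1 : forall t, 0 <= t -> is_derive x1 t (x2 t))
  (hx2 : forall t, 0 <= t ->
     is_derive x2 t (f t - lam kap kad wo (rref cr d (x1 0) (x2 0)) x1 x2 xi t))
  (hxi : forall t, 0 <= t ->
     is_derive xi t (- wo * xi t - wo ^ 2 * x2 t
                     + wo * lam kap kad wo (rref cr d (x1 0) (x2 0)) x1 x2 xi t))
  (* impulse response h of 1/(s^2 + kad s + kap) *)
  (h dh : R -> R)
  (hh : forall t, is_derive h t (dh t))
  (hdh : forall t, is_derive dh t (- kad * dh t - kap * h t))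
  (hh0 : h 0 = 0) (hdh0 : dh 0 = 1)
  (* normL1 = ||h||_{L1} = int_0^oo |h| *)
  (normL1 : R)
  (hnorm : is_RInt_gen (fun t => Rabs (h t)) (at_point 0) (Rbar_locally p_infty) normL1) :
  (* limsup_{T->oo} (1/T) int_0^T (x1 - d)_+ <= normL1 * Lf / wo *)
  forall eps, 0 < eps -> exists T0, 0 < T0 /\
    forall T, T0 <= T ->
      / T * RInt (fun t => pos_part (x1 t - d)) 0 T <= normL1 * Lf / wo + eps.
Proof.
  intros eps heps.
  set (r := rref cr d (x1 0) (x2 0)) in *.
  pose (c := x2 0 + cr * (x1 0 - d)).
  pose (r1 := fun t => (-cr*(x1 0 - d) + c - cr*c*t) * exp(-cr*t)).
  pose (r2 := fun t => (cr^2*(x1 0 - d) - 2*cr*c + cr^2*c*t) * exp(-cr*t)).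
  assert (Hr1 : forall t, is_derive r t (r1 t)).
  { intros t. unfold r, rref, r1, c. auto_derive; auto. unfold Rminus; ring. }
  assert (Hr2 : forall t, is_derive r1 t (r2 t)).
  { intros t. unfold r2, r1, c. auto_derive; auto. unfold Rminus; ring. }
  assert (HDr : Derive r = r1).
  { apply functional_extensionality; intro t; apply is_derive_unique, Hr1. }
  assert (HDDr : Derive (Derive r) = r2).
  { rewrite HDr. apply functional_extensionality; intro t; apply is_derive_unique, Hr2. }
  pose (fh := fhat wo xi x2).
  assert (HF : forall s, 0<=s -> is_derive fh s (wo*(f s - fh s))).
  { intros s hs. unfold fh, fhat. eapply isd_val. apply isd_plus. apply hxi; auto.
    apply is_derive_scal. apply hx2; auto. rring. }
  assert (Hg : forall y, 0<=y -> Rabs (f y - fh y) <= Lf/wo + exp(-wo*y)*Rabs(f 0 - fh 0)).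
  { intros; apply gbound; auto; lra. }
  pose (G := fun y => f (Rmax 0 y) - fh (Rmax 0 y)).
  assert (HGc : forall y, continuous G y).
  { intros y. unfold G. apply (continuous_minus (fun y => f (Rmax 0 y)) (fun y => fh (Rmax 0 y))).
    apply (lip_cont f Lf hLf hf).
    apply (continuous_comp (fun y => Rmax 0 y) fh).
    apply (lip_cont (fun s => s) 1). lra. intros; rewrite Rmult_1_l; lra.
    apply cont_of_derive. eexists. apply HF. apply Rmax_l. }
  assert (He : forall t, 0<=t -> is_RInt (fun u => h u * G (t-u)) 0 t (x1 t - r t)).
  { intros t ht. apply (conv_rep kap kad h dh G (fun t => x1 t - r t) (fun t => x2 t - r1 t)); auto.
    - intros x hx. eapply isd_val. apply (is_derive_minus x1 r). apply hx1; auto. apply Hr1.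
      unfold minus, plus, opp; simpl; ring.
    - intros x hx. eapply isd_val. apply (is_derive_minus x2 r1). apply hx2; auto. apply Hr2.
      unfold lam; rewrite HDDr, HDr. unfold G; rewrite Rmax_right by auto.
      unfold fh, minus, plus, opp; simpl. ring.
    - unfold r, rref. rewrite !Rmult_0_r, exp_0. ring.
    - unfold r1, c. rewrite !Rmult_0_r, exp_0. ring. }
  set (g0 := Rabs (f 0 - fh 0)) in *.
  assert (Hg0 : 0 <= g0) by apply Rabs_pos.
  assert (Hwo : 0 <= Lf/wo) by (apply Rdiv_le_0_compat; lra).
  set (Gm := Lf/wo + g0).
  assert (HGeq : forall y, 0 <= y -> G y = f y - fh y).
  { intros y hy. unfold G. rewrite Rmax_right by lra. reflexivity. }
  assert (HGb : forall y, 0 <= y -> Rabs (G y) <= Gm).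
  { intros y hy. rewrite HGeq by auto. eapply Rle_trans. apply Hg; auto.
    unfold Gm. assert (exp (-wo*y) <= 1). { rewrite <- exp_0. apply exp_le_mono. nra. }
    assert (exp (-wo*y) * g0 <= 1 * g0) by (apply Rmult_le_compat_r; lra). lra. }
  set (K := Rabs normL1 + Lf/wo + 2*Gm + 2).
  assert (HK : 2 <= K) by (unfold K, Gm; pose proof (Rabs_pos normL1); lra).
  set (eta := Rmin 1 (eps/(2*K))).
  assert (Heta0 : 0 < eta).
  { unfold eta. apply Rmin_pos. lra. apply Rdiv_lt_0_compat; lra. }
  assert (Heta1 : eta <= 1) by apply Rmin_l.
  assert (HetaK : eta * K <= eps/2).
  { assert (eta <= eps/(2*K)) by apply Rmin_r.
    apply Rle_trans with (eps/(2*K) * K). apply Rmult_le_compat_r; lra.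
    right; field; lra. }
  destruct (exp_small wo g0 0 eta hwo Hg0 (Rle_refl 0) Heta0) as [S [HS0 HS]].
  assert (HGs : forall y, S <= y -> Rabs (G y) <= Lf/wo + eta).
  { intros y hy. rewrite HGeq by lra. eapply Rle_trans. apply Hg; lra.
    specialize (HS y hy). rewrite Rmult_0_l, Rplus_0_r in HS. lra. }
  destruct (L1tail h normL1 hnorm eta Heta0) as [X HX].
  destruct (exp_small cr (Rabs (x1 0 - d)) (Rabs c) eta hcr (Rabs_pos _) (Rabs_pos _) Heta0) as [S2 [HS20 HS2]].
  assert (Hr : forall t, S2 <= t -> Rabs (r t - d) <= eta).
  { intros t ht. eapply Rle_trans. 2: apply (HS2 t ht).
    unfold r, rref. fold c.
    replace (d + (x1 0 - d) * exp (- cr * t) + c * t * exp (- cr * t) - d)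
      with (exp (-cr*t) * ((x1 0 - d) + c * t)) by ring.
    rewrite Rabs_mult, (Rabs_pos_eq (exp _)) by (left; apply exp_pos).
    apply Rmult_le_compat_l. left; apply exp_pos.
    eapply Rle_trans. apply Rabs_triang. rewrite Rabs_mult, (Rabs_pos_eq t) by lra. lra. }
  set (T2 := S + Rmax X 0 + S2 + 1).
  assert (HX0 : X <= Rmax X 0) by apply Rmax_l.
  assert (HX1 : 0 <= Rmax X 0) by apply Rmax_r.
  assert (Hhc : forall u, continuous h u).
  { intros u. apply cont_of_derive. eexists; apply hh. }
  assert (Hkex : forall t a b, ex_RInt (fun u => h u * G (t - u)) a b).
  { intros t a b. apply exRI_cont. intros z _. apply cont_mult. apply Hhc. apply cont_sub, HGc. }
  assert (Hhex : forall a b, ex_RInt (fun u => Rabs (h u)) a b).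
  { intros a b. apply exRI_cont. intros z _. apply (continuous_comp h Rabs). apply Hhc. apply continuous_Rabs. }
  assert (Hpt : forall t, T2 <= t -> pos_part (x1 t - d) <= normL1*Lf/wo + eps/2).
  { intros t ht.
    assert (Het := RInt_val _ _ _ _ (He t ltac:(unfold T2 in ht; lra))).
    rewrite <- (RInt_Chasles_R _ 0 (t - S) t (Hkex _ _ _) (Hkex _ _ _)) in Het.
    assert (B1 : Rabs (RInt (fun u => h u * G (t - u)) 0 (t - S)) <= (Lf/wo + eta) * RInt (fun u => Rabs (h u)) 0 (t - S)).
    { rewrite <- RInt_scal_R by apply Hhex.
      eapply Rle_trans. apply abs_RInt_le. unfold T2 in ht; lra. apply Hkex.
      apply RInt_le. unfold T2 in ht; lra.
      apply exRI_cont. intros z _. apply (continuous_comp _ Rabs). apply cont_mult. apply Hhc. apply cont_sub, HGc. apply continuous_Rabs.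
      apply ex_RInt_scal_R, Hhex.
      intros u hu. rewrite Rabs_mult, (Rmult_comm (Lf/wo + eta)). apply Rmult_le_compat_l. apply Rabs_pos. apply HGs; lra. }
    assert (B2 : Rabs (RInt (fun u => h u * G (t - u)) (t - S) t) <= Gm * RInt (fun u => Rabs (h u)) (t - S) t).
    { rewrite <- RInt_scal_R by apply Hhex.
      eapply Rle_trans. apply abs_RInt_le. lra. apply Hkex.
      apply RInt_le. lra.
      apply exRI_cont. intros z _. apply (continuous_comp _ Rabs). apply cont_mult. apply Hhc. apply cont_sub, HGc. apply continuous_Rabs.
      apply ex_RInt_scal_R, Hhex.
      intros u hu. rewrite Rabs_mult, (Rmult_comm Gm). apply Rmult_le_compat_l. apply Rabs_pos. apply HGb; lra. }
    assert (Hch := RInt_Chasles_R _ 0 (t - S) t (Hhex 0 (t - S)) (Hhex (t - S) t)).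
    assert (I1 := HX (t - S) ltac:(unfold T2 in ht; lra)).
    assert (I2 := HX t ltac:(unfold T2 in ht; lra)).
    set (I1v := RInt (fun u => Rabs (h u)) 0 (t - S)) in *.
    set (I2v := RInt (fun u => Rabs (h u)) 0 t) in *.
    set (I3v := RInt (fun u => Rabs (h u)) (t - S) t) in *.
    set (J1 := RInt (fun u => h u * G (t - u)) 0 (t - S)) in *.
    set (J2 := RInt (fun u => h u * G (t - u)) (t - S) t) in *.
    assert (HI1 : I1v <= normL1 + eta) by (revert I1; split_Rabs; lra).
    assert (HI2 : I3v <= 2 * eta) by (revert I1 I2; split_Rabs; lra).
    assert (C1 : (Lf/wo + eta) * I1v <= (Lf/wo + eta) * (normL1 + eta)) by (apply Rmult_le_compat_l; lra).
    assert (HGm : 0 <= Gm) by (unfold Gm; lra).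
    assert (C2 : Gm * I3v <= Gm * (2 * eta)) by (apply Rmult_le_compat_l; lra).
    assert (Hrt := Hr t ltac:(unfold T2 in ht; lra)).
    assert (Hn : normL1 <= Rabs normL1) by apply RRle_abs.
    assert (Hpp : pos_part (x1 t - d) <= Rabs (x1 t - r t) + Rabs (r t - d)).
    { unfold pos_part, Rmax. destruct (Rle_dec (x1 t - d) 0); split_Rabs; lra. }
    assert (Hsum : Rabs (x1 t - r t) <= Rabs J1 + Rabs J2) by (rewrite <- Het; apply Rabs_triang).
    assert (E1 : eta * eta <= eta * 1) by (apply Rmult_le_compat_l; lra).
    assert (E2 : eta * Rabs normL1 + eta * (Lf/wo) + eta * 2 * Gm + eta * 2 <= eps / 2) by (unfold K in HetaK; lra).
    assert (E3 : eta * normL1 <= eta * Rabs normL1) by (apply Rmult_le_compat_l; lra).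
    replace (normL1 * Lf / wo) with (normL1 * (Lf/wo)) by (field; lra).
    assert (X1 : (Lf/wo+eta)*(normL1+eta) = normL1*(Lf/wo) + eta*(Lf/wo) + eta*normL1 + eta*eta) by ring.
    assert (X2 : Gm*(2*eta) = eta*2*Gm) by ring.
    lra. }
  set (A := normL1*Lf/wo + eps/2).
  pose (p := fun t => pos_part (x1 t - d)).
  assert (Hpc : forall z, 0 <= z -> continuous p z).
  { intros z hz. unfold p, pos_part.
    apply (continuous_ext (fun t => Rmax 0 (x1 t - d))). intros; apply Rmax_comm.
    apply (continuous_comp (fun t => x1 t - d) (fun s => Rmax 0 s)).
    apply cont_of_derive. exists (x2 z + 0).
    apply (isd_plus x1 (fun _ => -d)). apply hx1; auto. apply (is_derive_const (K:=R_AbsRing) (V:=R_NormedModule)).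
    apply (lip_cont (fun s => s) 1). lra. intros; rewrite Rmult_1_l; lra. }
  assert (Hpex : forall a b, 0 <= a -> a <= b -> ex_RInt p a b).
  { intros a b ha hab. apply exRI_cont. intros z hz. rewrite Rmin_left, Rmax_right in hz by lra. apply Hpc; lra. }
  assert (HT2 : 0 <= T2) by (unfold T2; lra).
  set (C := RInt p 0 T2).
  exists (T2 + 1 + 2*Rabs (C - A*T2)/eps).
  assert (Hq : 0 <= 2*Rabs (C - A*T2)/eps) by (apply Rdiv_le_0_compat; [pose proof (Rabs_pos (C - A*T2)); lra | lra]).
  split. lra.
  intros T HT.
  assert (HTp : 0 < T) by lra.
  change (RInt (fun t => pos_part (x1 t - d)) 0 T) with (RInt p 0 T).
  rewrite <- (RInt_Chasles_R p 0 T2 T (Hpex 0 T2 ltac:(lra) ltac:(lra)) (Hpex T2 T ltac:(lra) ltac:(lra))).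
  fold C.
  assert (Hle : RInt p T2 T <= (T - T2) * A).
  { rewrite <- RInt_const_R. apply RInt_le. lra. apply Hpex; lra.
    apply exRI_cont; intros; apply continuous_const.
    intros x hx. unfold p. apply Hpt. lra. }
  assert (Hq2 : Rabs (C - A*T2) <= T * (eps/2)).
  { assert (2*Rabs(C-A*T2)/eps * (eps/2) = Rabs (C - A*T2)) by (field; lra).
    assert (2*Rabs (C-A*T2)/eps <= T) by lra.
    assert (2*Rabs (C-A*T2)/eps * (eps/2) <= T * (eps/2)) by (apply Rmult_le_compat_r; lra). lra. }
  apply Rmult_le_reg_l with T. lra.
  rewrite <- Rmult_assoc, Rinv_r, Rmult_1_l by lra.
  assert (C - A*T2 <= Rabs (C - A*T2)) by apply RRle_abs.
  assert (Y1 : T * (normL1 * Lf / wo + eps) = T * A + T * (eps/2)) by (unfold A; field; lra).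
  assert (Y2 : (T - T2) * A = T * A - A * T2) by ring.
  lra.
Qed.
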